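(* Let $G$ be a group acting specially on a quasi-median graph $X$ with finitely many orbits of vertices. Fix a set of representatives $\{J_i\mid i\in I\}$ of the hyperplanes of $X$ modulo $G$ and, for each $i\in I$, let $G_i:=\mathfrak{S}(J_i)\oplus K_i$ where $K_i$ is a group whose cardinality equals the number of orbits of $\mathfrak{S}(J_i)\curvearrowright\mathscr{S}(J_i)$. Then, for every $i\in I$, $K_i$ is finite and $\mathfrak{S}(J_i)$ contains a finite-index subgroup isomorphic to $\mathrm{stab}_G(C)$ for a clique $C$ of $X$ (whose edges lie in $J_i$); in particular $G_i$ contains a finite-index subgroup isomorphic to the stabiliser of a clique of $X$.
   Context: A connected simplicial graph $X$ is quasi-median if it contains neither $K_4^-$ (the complete graph on four vertices minus an edge) nor $K_{3,2}$ as an induced subgraph, and satisfies: (triangle condition) for all vertices $a,x,y$ with $x,y$ adjacent and $d(a,x)=d(a,y)$, there is a vertex $z$ adjacent to both $x,y$ with $d(a,z)=d(a,x)-1$; (quadrangle condition) for all vertices $a,x,y,z$ with $z$ adjacent to both $x$ and $y$ and $d(a,x)=d(a,y)=d(a,z)-1$, there is a vertex $w$ adjacent to both $x,y$ with $d(a,w)=d(a,z)-2$. A square is an induced 4-cycle; a clique is a maximal complete subgraph. A hyperplane is an equivalence class of edges for the transitive closure of the relation ''the two edges lie in a common triangle, or are opposite sides of a square''. The sectors of a hyperplane $J$ are the connected components of the graph obtained from $X$ by removing the interiors of all edges of $J$; $\mathscr{S}(J)$ denotes the set of sectors of $J$. The carrier $N(J)$ is the subgraph spanned by the edges of $J$.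 Two hyperplanes $J_1,J_2$ are transverse if there exist edges $e_1\in J_1$, $e_2 \in J_2$ which are two consecutive sides of a square; two distinct hyperplanes are tangent if they are not transverse and $N(J_1)\cap N(J_2)\neq\emptyset$. For a group $G$ acting by graph automorphisms on $X$, $\mathfrak{S}(J)$ denotes the image of $\mathrm{stab}_G(J)$ in the permutation group of $\mathscr{S}(J)$. The action is hyperplane-special if it is faithful and: (1) for every hyperplane $J$ and every $g\in G$ with $gJ\neq J$, $J$ and $gJ$ are neither transverse nor tangent; (2) for all transverse hyperplanes $J_1,J_2$ and every $g\in G$, $J_1$ and $gJ_2$ are not tangent. The action is special if it is hyperplane-special and, for every hyperplane $J$, the action $\mathfrak{S}(J)\curvearrowright\mathscr{S}(J)$ is free. *)

(* Defs.v *)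
From Stdlib Require Import List Relations.
Import ListNotations.
Set Implicit Arguments.

Definition is_group (G : Type) (mul : G -> G -> G) (inv : G -> G) (one : G) : Prop :=
  (forall a b c, mul a (mul b c) = mul (mul a b) c) /\
  (forall a, mul one a = a) /\
  (forall a, mul (inv a) a = one).

(* A "group" given by a subset memA of a carrier with multiplication mulA, whose
   elements are compared up to the congruence eqA (used to model a quotient,
   e.g. the image of stab_G(J) in Sym(S(J))).
   [fi_sub_iso ...] : A contains a finite-index subgroup isomorphic to the group
   (memB, mulB) (with Leibniz equality), i.e. there is an injective homomorphism
   phi from B to A whose image has finitely many left cosets in A. *)
Definition fi_sub_iso (A B : Type)
  (memA : A -> Prop) (eqA : A -> A -> Prop) (mulA : A -> A -> A)
  (memB : B -> Prop) (mulB : B -> B -> B) : Prop :=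
  exists phi : B -> A,
    (forall b, memB b -> memA (phi b)) /\
    (forall b1 b2, memB b1 -> memB b2 ->
        eqA (phi (mulB b1 b2)) (mulA (phi b1) (phi b2))) /\
    (forall b1 b2, memB b1 -> memB b2 -> eqA (phi b1) (phi b2) -> b1 = b2) /\
    (exists l : list A, (forall c, In c l -> memA c) /\
       forall a, memA a -> exists c b, In c l /\ memB b /\ eqA a (mulA c (phi b))).

Section Graph.
Variable V : Type.
Variable adj : V -> V -> Prop.

Definition simplicial : Prop :=
  (forall x, ~ adj x x) /\ (forall x y, adj x y -> adj y x).

Inductive walk : V -> V -> nat -> Prop :=
| walk0 : forall x, walk x x 0
| walkS : forall x y z n, adj x y -> walk y z n -> walk x z (S n).

Definition connected : Prop := forall x y, exists n, walk x y n.

Definition dist (x y : V) (n : nat) : Prop :=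
  walk x y n /\ forall m, walk x y m -> n <= m.

Definition induced_K4minus (a b c d : V) : Prop :=
  adj a b /\ adj a c /\ adj a d /\ adj b c /\ adj b d /\ c <> d /\ ~ adj c d.

Definition induced_K32 (a1 a2 a3 b1 b2 : V) : Prop :=
  a1 <> a2 /\ a1 <> a3 /\ a2 <> a3 /\ b1 <> b2 /\
  adj a1 b1 /\ adj a1 b2 /\ adj a2 b1 /\ adj a2 b2 /\ adj a3 b1 /\ adj a3 b2 /\
  ~ adj a1 a2 /\ ~ adj a1 a3 /\ ~ adj a2 a3 /\ ~ adj b1 b2.

Definition triangle_condition : Prop :=
  forall a x y n, adj x y -> dist a x n -> dist a y n ->
    exists z, adj z x /\ adj z y /\ dist a z (n - 1).

Definition quadrangle_condition : Prop :=
  forall a x y z n, x <> y -> adj z x -> adj z y ->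
    dist a x n -> dist a y n -> dist a z (S n) ->
    exists w, adj w x /\ adj w y /\ dist a w (n - 1).

Definition quasi_median : Prop :=
  simplicial /\ connected /\
  (forall a b c d, ~ induced_K4minus a b c d) /\
  (forall a1 a2 a3 b1 b2, ~ induced_K32 a1 a2 a3 b1 b2) /\
  triangle_condition /\ quadrangle_condition.

Definition is_square (a b c d : V) : Prop :=
  adj a b /\ adj b c /\ adj c d /\ adj d a /\ a <> c /\ b <> d /\
  ~ adj a c /\ ~ adj b d.

(* edges are represented by ordered pairs of adjacent vertices,
   identified up to orientation *)
Definition is_edge (e : V * V) : Prop := adj (fst e) (snd e).
Definition unord_eq (e f : V * V) : Prop :=
  e = f \/ (fst e = snd f /\ snd e = fst f).

Definition hyp_step (e f : V * V) : Prop :=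
  is_edge e /\ is_edge f /\
  ( unord_eq e f
  \/ (exists x y z, adj x y /\ adj y z /\ adj x z /\
        (unord_eq e (x, y) \/ unord_eq e (y, z) \/ unord_eq e (x, z)) /\
        (unord_eq f (x, y) \/ unord_eq f (y, z) \/ unord_eq f (x, z)))
  \/ (exists a b c d, is_square a b c d /\
        ((unord_eq e (a, b) /\ unord_eq f (c, d)) \/
         (unord_eq e (b, c) /\ unord_eq f (d, a))))).

(* a hyperplane: an equivalence class of edges, given as a predicate on
   oriented edges (closed under reversal of orientation) *)
Definition is_hyperplane (J : V * V -> Prop) : Prop :=
  exists e0, is_edge e0 /\
    forall f, J f <-> clos_refl_trans _ hyp_step e0 f.

Definition same_hyp (J1 J2 : V * V -> Prop) : Prop := forall e, J1 e <-> J2 e.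

Definition in_carrier (J : V * V -> Prop) (v : V) : Prop := exists w, J (v, w).

Definition transverse (J1 J2 : V * V -> Prop) : Prop :=
  exists a b c d, is_square a b c d /\ J1 (a, b) /\ J2 (b, c).

Definition tangent (J1 J2 : V * V -> Prop) : Prop :=
  ~ same_hyp J1 J2 /\ ~ transverse J1 J2 /\
  exists v, in_carrier J1 v /\ in_carrier J2 v.

(* x and y lie in the same sector of J: connected in X minus the
   (interiors of the) edges of J *)
Definition same_sector (J : V * V -> Prop) : V -> V -> Prop :=
  clos_refl_trans _ (fun x y => adj x y /\ ~ J (x, y)).

Definition is_clique (C : V -> Prop) : Prop :=
  (forall x y, C x -> C y -> x <> y -> adj x y) /\
  (forall v, ~ C v -> ~ (forall x, C x -> x <> v -> adj x v)).

End Graph.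

Section Action.
Variables (G V : Type) (mul : G -> G -> G) (inv : G -> G) (one : G).
Variable adj : V -> V -> Prop.
Variable act : G -> V -> V.

Definition is_graph_action : Prop :=
  (forall x, act one x = x) /\
  (forall g h x, act (mul g h) x = act g (act h x)) /\
  (forall g x y, adj x y <-> adj (act g x) (act g y)).

Definition faithful : Prop := forall g, (forall x, act g x = x) -> g = one.

Definition translate_hyp (g : G) (J : V * V -> Prop) : V * V -> Prop :=
  fun e => J (act (inv g) (fst e), act (inv g) (snd e)).

Definition stab_hyp (J : V * V -> Prop) (g : G) : Prop :=
  same_hyp (translate_hyp g J) J.

Definition stab_set (C : V -> Prop) (g : G) : Prop :=
  forall v, C (act (inv g) v) <-> C v.

(* two elements of stab_G(J) have the same image in the permutation group of
   the set of sectors S(J) (g sends the sector of x to the sector of g x) *)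
Definition sect_eq (J : V * V -> Prop) (g h : G) : Prop :=
  forall x, same_sector adj J (act g x) (act h x).

Definition hyperplane_special : Prop :=
  faithful /\
  (forall J g, is_hyperplane adj J -> ~ same_hyp (translate_hyp g J) J ->
     ~ transverse adj J (translate_hyp g J) /\ ~ tangent adj J (translate_hyp g J)) /\
  (forall J1 J2 g, is_hyperplane adj J1 -> is_hyperplane adj J2 ->
     transverse adj J1 J2 -> ~ tangent adj J1 (translate_hyp g J2)).

(* the action of frak-S(J) on the sectors of J is free: an element fixing some
   sector acts trivially on all sectors *)
Definition special_action : Prop :=
  hyperplane_special /\
  (forall J, is_hyperplane adj J -> forall g, stab_hyp J g ->
     (exists x, same_sector adj J (act g x) x) ->
     forall y, same_sector adj J (act g y) y).

Definition finitely_many_vertex_orbits : Prop :=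
  exists l : list V, forall v, exists u g, In u l /\ act g u = v.

Definition sector_orbit_rel (J : V * V -> Prop) (x y : V) : Prop :=
  exists g, stab_hyp J g /\ same_sector adj J (act g x) y.

End Action.

(* Main.v *)
Require Import Defs.
From Stdlib Require Import List Relations Lia Classical ClassicalEpsilon FunctionalExtensionality PropExtensionality.
Import ListNotations.

Lemma nat_min (P : nat -> Prop) n : P n -> exists m, P m /\ forall k, P k -> m <= k.
Proof.
  induction n as [n IH] using (well_founded_induction Wf_nat.lt_wf).
  intros Hn. destruct (classic (exists k, k < n /\ P k)) as [[k [Hk Pk]]|Hno].
  - exact (IH k Hk Pk).
  - exists n. split; auto. intros k Pk. destruct (PeanoNat.Nat.lt_ge_cases k n); auto.
    exfalso; eauto.
Qed.

Section QM.
Variable V : Type.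
Variable adj : V -> V -> Prop.
Hypothesis HX : quasi_median adj.

Lemma Hsimp : simplicial adj. Proof. apply HX. Qed.
Lemma Hconn : connected adj. Proof. apply HX. Qed.
Lemma adj_sym x y : adj x y -> adj y x. Proof. apply Hsimp. Qed.
Lemma adj_irr x : ~ adj x x. Proof. apply Hsimp. Qed.
Lemma adj_neq x y : adj x y -> x <> y. Proof. intros H E; subst; eapply adj_irr; eauto. Qed.

Lemma walk_snoc x y z n : walk adj x y n -> adj y z -> walk adj x z (S n).
Proof. induction 1; intros. - econstructor; eauto. constructor. - econstructor; eauto. Qed.

Lemma walk_rev x y n : walk adj x y n -> walk adj y x n.
Proof. induction 1. constructor. apply walk_snoc with y; auto. apply adj_sym; auto. Qed.

Lemma walk_last n : forall x z, walk adj x z (S n) -> exists y, walk adj x y n /\ adj y z.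
Proof.
  induction n; intros x z H; inversion H; subst.
  - inversion H4; subst. exists x. split; [constructor|auto].
  - destruct (IHn _ _ H4) as [y' [W A]]. exists y'. split; auto. econstructor; eauto.
Qed.

Lemma dist_ex x y : exists n, dist adj x y n.
Proof. destruct (Hconn x y) as [n Hn]. destruct (nat_min (walk adj x y) n Hn) as [m [H1 H2]].
  exists m. split; auto. Qed.

Definition d x y : nat := proj1_sig (constructive_indefinite_description _ (dist_ex x y)).
Lemma d_spec x y : dist adj x y (d x y).
Proof. unfold d. destruct (constructive_indefinite_description _ _); auto. Qed.
Lemma d_walk x y : walk adj x y (d x y). Proof. apply d_spec. Qed.
Lemma d_le x y n : walk adj x y n -> d x y <= n. Proof. apply d_spec. Qed.
Lemma d_uniq x y n : dist adj x y n -> d x y = n.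
Proof. intros [W M]. apply PeanoNat.Nat.le_antisymm. apply d_le; auto. apply M, d_walk. Qed.
Lemma d_sym x y : d x y = d y x.
Proof. apply PeanoNat.Nat.le_antisymm; apply d_le, walk_rev, d_walk. Qed.
Lemma d_refl x : d x x = 0. Proof. assert (H := d_le x x 0 (walk0 adj x)). lia. Qed.
Lemma d_zero x y : d x y = 0 -> x = y.
Proof. intros H. assert (W := d_walk x y). rewrite H in W. inversion W; auto. Qed.
Lemma d_adj x y z : adj y z -> d x z <= S (d x y).
Proof. intros A. apply d_le. eapply walk_snoc; eauto. apply d_walk. Qed.
Lemma d_adj' x y z : adj y z -> d x y <= S (d x z).
Proof. intros A. apply d_adj, adj_sym; auto. Qed.
Lemma d_adj1 x y : adj x y -> d x y = 1.
Proof. intros A. assert (H : d x y <= 1). { apply d_le. econstructor; eauto. constructor. }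
  destruct (d x y) eqn:E; [|lia]. apply d_zero in E. exfalso; eapply adj_neq; eauto. Qed.

Lemma tri_cond a x y : adj x y -> d a x = d a y ->
  exists z, adj z x /\ adj z y /\ d a z = d a x - 1.
Proof.
  intros A E. destruct HX as [_ [_ [_ [_ [T _]]]]].
  destruct (T a x y (d a x) A (d_spec a x)) as [z [H1 [H2 H3]]].
  rewrite E; apply d_spec. exists z; repeat split; auto. apply d_uniq; auto.
Qed.

Lemma quad_cond a x y z : x <> y -> adj z x -> adj z y -> d a x = d a y ->
  d a z = S (d a x) -> exists w, adj w x /\ adj w y /\ d a w = d a x - 1.
Proof.
  intros N A1 A2 E1 E2. destruct HX as [_ [_ [_ [_ [_ Q]]]]].
  destruct (Q a x y z (d a x) N A1 A2 (d_spec a x)) as [w [H1 [H2 H3]]].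
  rewrite E1; apply d_spec. rewrite <- E2; apply d_spec.
  exists w; repeat split; auto. apply d_uniq; auto.
Qed.

Lemma noK4 a b c e : adj a b -> adj a c -> adj a e -> adj b c -> adj b e -> c <> e -> ~ adj c e -> False.
Proof. intros. destruct HX as [_ [_ [K _]]]. apply (K a b c e). repeat split; auto. Qed.

Lemma KK x y u1 u2 u3 : x <> y -> ~ adj x y ->
  adj u1 x -> adj u1 y -> adj u2 x -> adj u2 y -> adj u3 x -> adj u3 y ->
  u1 <> u2 -> u1 <> u3 -> u2 <> u3 -> ~ adj u1 u2 -> ~ adj u1 u3 -> False.
Proof.
  intros. destruct (classic (adj u2 u3)).
  - apply (noK4 u2 u3 x y); auto.
  - destruct HX as [_ [_ [_ [K _]]]]. apply (K u1 u2 u3 x y). repeat split; auto.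
Qed.


Section Theta.
Variables x0 y0 : V.
Hypothesis Hxy : adj x0 y0.

Definition C0 (z : V) : Prop := z = x0 \/ z = y0 \/ (adj z x0 /\ adj z y0).

Lemma C0_clique : is_clique adj C0.
Proof.
  split.
  - intros x y Hx Hy N.
    destruct Hx as [->|[->|[Ax1 Ax2]]]; destruct Hy as [->|[->|[Ay1 Ay2]]];
      try (exfalso; apply N; reflexivity); auto using adj_sym.
    destruct (classic (adj x y)) as [|NA]; auto. exfalso.
    apply (noK4 x0 y0 x y); auto using adj_sym.
  - intros v Nv H. apply Nv. right; right.
    assert (v <> x0) by (intros ->; apply Nv; left; auto).
    assert (v <> y0) by (intros ->; apply Nv; right; left; auto).
    split; apply adj_sym; apply H; auto; unfold C0; auto.
Qed.

Lemma C0_adj x y : C0 x -> C0 y -> x <> y -> adj x y.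
Proof. apply C0_clique. Qed.

Lemma into_C0 z c p : C0 c -> C0 p -> c <> p -> adj z c -> adj z p -> C0 z.
Proof.
  intros Hc Hp N A1 A2. destruct (classic (C0 z)) as [|Nz]; auto. exfalso.
  apply (proj2 C0_clique z Nz). intros r Cr rz.
  destruct (classic (r = c)) as [->|Nc]; auto using adj_sym.
  destruct (classic (r = p)) as [->|Np]; auto using adj_sym.
  destruct (classic (adj r z)) as [|NA]; auto. exfalso.
  apply (noK4 c p r z); auto using adj_sym, C0_adj.
Qed.

Lemma fC_ex v : exists m, (exists c, C0 c /\ d c v = m) /\
   forall k, (exists c, C0 c /\ d c v = k) -> m <= k.
Proof. apply (nat_min _ (d x0 v)). exists x0; split; auto. left; auto. Qed.

Definition fC v : nat := proj1_sig (constructive_indefinite_description _ (fC_ex v)).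
Lemma fC_spec v : (exists c, C0 c /\ d c v = fC v) /\
   forall k, (exists c, C0 c /\ d c v = k) -> fC v <= k.
Proof. unfold fC. destruct (constructive_indefinite_description _ _); auto. Qed.
Lemma fC_le c v : C0 c -> fC v <= d c v.
Proof. intros Hc. apply fC_spec. eauto. Qed.

Definition pi v : V := proj1_sig (constructive_indefinite_description _ (proj1 (fC_spec v))).
Lemma pi_spec v : C0 (pi v) /\ d (pi v) v = fC v.
Proof. unfold pi. destruct (constructive_indefinite_description _ _); auto. Qed.
Lemma pi_C v : C0 (pi v). Proof. apply pi_spec. Qed.
Lemma pi_d v : d (pi v) v = fC v. Proof. apply pi_spec. Qed.

Lemma gate_other c v : C0 c -> c <> pi v -> d c v = S (fC v).
Proof.
  intros Hc N. assert (A : adj (pi v) c) by (apply C0_adj; auto using pi_C).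
  assert (H1 : d c v <= S (fC v)).
  { rewrite d_sym, <- pi_d, (d_sym (pi v)). apply d_adj; auto. }
  assert (H2 := fC_le c v Hc).
  destruct (classic (d c v = fC v)) as [E|]; [|lia]. exfalso.
  destruct (tri_cond v c (pi v)) as [z [Z1 [Z2 Z3]]].
  - apply adj_sym; auto.
  - rewrite (d_sym v c), (d_sym v (pi v)), E, pi_d; auto.
  - destruct (fC v) eqn:F.
    + apply N. apply d_zero in E. assert (E2 := pi_d v). rewrite F in E2.
      apply d_zero in E2. congruence.
    + assert (Cz : C0 z) by (apply (into_C0 z c (pi v)); auto using pi_C).
      assert (H3 := fC_le z v Cz). rewrite d_sym in H3. rewrite Z3, d_sym, E in H3. lia.
Qed.

Lemma gate_eq c v : C0 c -> d c v = fC v -> c = pi v.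
Proof. intros Hc E. destruct (classic (c = pi v)); auto. rewrite gate_other in E; auto; lia. Qed.

Lemma pi_of_C v : C0 v -> pi v = v.
Proof. intros H. symmetry. apply gate_eq; auto. rewrite d_refl. assert (X := fC_le v v H).
  rewrite d_refl in X; lia. Qed.

Lemma fC_zero v : fC v = 0 -> C0 v.
Proof. intros H. assert (E := pi_d v). rewrite H in E. apply d_zero in E. rewrite <- E. apply pi_C. Qed.

Lemma fC_adj x y : adj x y -> fC x <= S (fC y).
Proof. intros A. assert (H1 := fC_le (pi y) x (pi_C y)).
  assert (H2 := d_adj (pi y) y x (adj_sym _ _ A)). rewrite pi_d in H2. lia. Qed.

Lemma d_pi_other c v : C0 c -> c <> pi v -> d c v = S (fC v).
Proof. apply gate_other. Qed.

Lemma neq_f v w : adj v w -> pi v <> pi w -> fC v = fC w.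
Proof.
  intros A N.
  assert (E1 : d (pi v) w = S (fC w)) by (apply gate_other; auto using pi_C).
  assert (E2 : d (pi w) v = S (fC v)) by (apply gate_other; auto using pi_C).
  assert (L1 := d_adj (pi v) v w A). assert (L2 := d_adj (pi w) w v (adj_sym _ _ A)).
  rewrite pi_d in L1, L2. lia.
Qed.


Lemma dpi v c : pi v = c -> d c v = fC v.
Proof. intros <-; apply pi_d. Qed.
Lemma dnpi v c : C0 c -> pi v <> c -> d c v = S (fC v).
Proof. intros H N; apply gate_other; auto. Qed.

Lemma TRI x y z : adj x y -> adj y z -> adj x z -> pi x <> pi y -> pi z = pi x -> False.
Proof.
  intros Axy Ayz Axz N E.
  assert (F1 := neq_f x y Axy N).
  assert (F2 : fC z = fC y) by (apply neq_f; [apply adj_sym; auto| congruence]).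
  assert (D1 : d (pi x) x = fC x) by apply pi_d.
  assert (D2 : d (pi x) z = fC z) by (apply dpi; auto).
  assert (D3 : d (pi x) y = S (fC y)) by (apply dnpi; auto using pi_C).
  destruct (fC x) eqn:Fx.
  - apply d_zero in D1. rewrite F2, <- F1 in D2. apply d_zero in D2.
    apply (adj_irr x). congruence.
  - destruct (tri_cond (pi x) x z) as [w [W1 [W2 W3]]]; auto. congruence.
    apply (noK4 x z y w); auto using adj_sym.
    + intros ->. lia.
    + intros A. assert (L := d_adj (pi x) w y (adj_sym _ _ A)). lia.
Qed.

Lemma SQ1 a b c e : is_square adj a b c e -> pi a = pi c -> pi c = pi e -> pi a <> pi b -> False.
Proof.
  intros [Aab [Abc [Ace [Aea [Nac [Nbe [NAac NAbe]]]]]]] E1 E2 N.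
  assert (F1 := neq_f a b Aab N).
  assert (F2 : fC b = fC c) by (apply neq_f; auto; congruence).
  assert (Da : d (pi a) a = fC a) by apply pi_d.
  assert (Dc : d (pi a) c = fC c) by (apply dpi; auto).
  assert (Db : d (pi a) b = S (fC b)) by (apply dnpi; auto using pi_C).
  destruct (fC a) as [|n] eqn:Fa.
  { apply d_zero in Da. rewrite <- F2, <- F1 in Dc. apply d_zero in Dc. congruence. }
  destruct (classic (S n <= d (pi a) e)) as [Ge|Lt].
  - destruct (quad_cond (pi a) a c b) as [w [W1 [W2 W3]]]; auto using adj_sym.
    congruence. lia.
    apply (KK a c b e w); auto using adj_sym.
    + intros ->. lia.
    + intros ->. lia.
    + intros A. assert (L := d_adj (pi a) w b (adj_sym _ _ A)). lia.
  - assert (L := d_adj (pi a) e a Aea).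
    assert (De : d (pi a) e = fC e) by (apply dpi; congruence).
    assert (Nq : pi b <> pi e) by congruence.
    assert (Qe : d (pi b) e = S (fC e)) by (apply dnpi; auto using pi_C).
    assert (Qb : d (pi b) b = fC b) by apply pi_d.
    assert (Qa : d (pi b) a = S (fC a)) by (apply dnpi; auto using pi_C).
    assert (Qc : d (pi b) c = S (fC c)) by (apply dnpi; auto using pi_C; congruence).
    destruct (quad_cond (pi b) b e a) as [w [W1 [W2 W3]]]; auto using adj_sym.
    lia. lia.
    apply (KK b e a c w); auto using adj_sym.
    + intros ->. lia.
    + intros ->. lia.
    + intros A. assert (L2 := d_adj (pi b) w a (adj_sym _ _ A)). lia.
Qed.

Lemma SQ3 a b c e : is_square adj a b c e -> pi c = pi e -> pi c <> pi a -> pi c <> pi b ->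
  pi a <> pi b -> False.
Proof.
  intros [Aab [Abc [Ace [Aea [Nac [Nbe [NAac NAbe]]]]]]] E Nca Ncb N.
  assert (F1 := neq_f a b Aab N).
  assert (F2 : fC b = fC c) by (apply neq_f; auto).
  assert (F3 : fC a = fC e) by (apply neq_f; auto using adj_sym; congruence).
  assert (Ra : d (pi c) a = S (fC a)) by (apply dnpi; auto using pi_C).
  assert (Rb : d (pi c) b = S (fC b)) by (apply dnpi; auto using pi_C).
  assert (Rc : d (pi c) c = fC c) by apply pi_d.
  assert (Re : d (pi c) e = fC e) by (apply dpi; auto).
  assert (Pa : d (pi a) a = fC a) by apply pi_d.
  assert (Pb : d (pi a) b = S (fC b)) by (apply dnpi; auto using pi_C).
  assert (Pe : d (pi a) e = S (fC e)) by (apply dnpi; auto using pi_C; congruence).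
  destruct (fC a) as [|n] eqn:Fa.
  { apply Nac. assert (Ca := fC_zero a Fa). assert (Cc : C0 c) by (apply fC_zero; lia).
    destruct (classic (a = c)); auto. exfalso; apply NAac, C0_adj; auto. }
  destruct (tri_cond (pi c) a b) as [z [Z1 [Z2 Z3]]]; auto. lia.
  assert (Lz1 := fC_le (pi c) z (pi_C c)).
  assert (Lz2 := fC_adj a z (adj_sym _ _ Z1)).
  assert (Fz : fC z = S n).
  { destruct (classic (fC z = S n)) as [|NE]; auto. exfalso.
    assert (Pz : pi z = pi a).
    { destruct (classic (pi z = pi a)) as [|NP]; auto.
      assert (X := neq_f a z (adj_sym _ _ Z1) (fun h => NP (eq_sym h))). lia. }
    assert (Dz : d (pi a) z = fC z) by (apply dpi; auto).
    assert (L := d_adj (pi a) z b Z2). lia. }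
  assert (Pz : pi c = pi z) by (apply gate_eq; auto using pi_C; lia).
  assert (NAze : ~ adj z e).
  { intros A. apply (TRI z a e); auto using adj_sym. congruence. congruence. }
  assert (Nze : z <> e) by (intros ->; apply NAbe, adj_sym; auto).
  destruct (quad_cond (pi c) z e a) as [w [W1 [W2 W3]]]; auto using adj_sym. lia. lia.
  assert (Lw1 := fC_le (pi c) w (pi_C c)).
  assert (Lw2 := fC_adj e w (adj_sym _ _ W2)).
  assert (Pw : pi c = pi w) by (apply gate_eq; auto using pi_C; lia).
  assert (Dw : d (pi a) w = S (fC w)) by (apply dnpi; auto using pi_C; congruence).
  assert (Naw : a <> w) by (intros ->; lia).
  assert (NAaw : ~ adj a w) by (intros A; assert (L := d_adj (pi c) w a (adj_sym _ _ A)); lia).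
  destruct (quad_cond (pi a) a w e) as [u [U1 [U2 U3]]]; auto using adj_sym. lia. lia.
  assert (Dz : d (pi a) z = S (fC z)) by (apply dnpi; auto using pi_C; congruence).
  apply (KK a w e z u); auto using adj_sym.
  all: try (intros ->; lia).
  all: try (intros A; apply NAze, adj_sym; auto; fail).
  all: try (intros A; assert (L := d_adj (pi a) u e (adj_sym _ _ A)); lia).
Qed.

Lemma SQ a b c e : is_square adj a b c e -> pi a <> pi b -> pi c <> pi e.
Proof.
  intros S N E.
  destruct (classic (pi c = pi a)) as [Ea|Na].
  - apply (SQ1 a b c e); auto.
  - destruct (classic (pi c = pi b)) as [Eb|Nb].
    + destruct S as [Aab [Abc [Ace [Aea [Nac [Nbe [NAac NAbe]]]]]]].
      apply (SQ1 b a e c); auto. repeat split; auto using adj_sym. congruence.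
    + apply (SQ3 a b c e); auto.
Qed.


Definition J0 (e : V * V) : Prop := clos_refl_trans _ (hyp_step adj) (x0, y0) e.

Lemma unord_P e a b : unord_eq e (a, b) -> (pi (fst e) <> pi (snd e) <-> pi a <> pi b).
Proof. intros [->|[E1 E2]]; simpl in *; [tauto|]. rewrite E1, E2. split; intros H X; apply H; auto. Qed.

Lemma T2 a b c : adj a b -> adj b c -> adj a c -> pi a <> pi b -> pi c <> pi a /\ pi c <> pi b.
Proof.
  intros. split; intros E.
  - apply (TRI a b c); auto.
  - apply (TRI b a c); auto using adj_sym.
Qed.

Lemma tri_all x y z : adj x y -> adj y z -> adj x z ->
  (pi x <> pi y \/ pi y <> pi z \/ pi x <> pi z) ->
  pi x <> pi y /\ pi y <> pi z /\ pi x <> pi z.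
Proof.
  intros Axy Ayz Axz [H|[H|H]].
  - destruct (T2 x y z Axy Ayz Axz H) as [H1 H2]. repeat split; auto.
  - destruct (T2 y z x Ayz (adj_sym _ _ Axz) (adj_sym _ _ Axy) H) as [H1 H2]. repeat split; auto.
  - destruct (T2 x z y Axz (adj_sym _ _ Ayz) Axy H) as [H1 H2]. repeat split; auto.
Qed.

Lemma sq_rot a b c e : is_square adj a b c e -> is_square adj b c e a.
Proof. intros [A1 [A2 [A3 [A4 [N1 [N2 [N3 N4]]]]]]]. repeat split; auto.
  intros X; apply N3, adj_sym; auto. Qed.

Lemma hs_pres e f : hyp_step adj e f -> pi (fst e) <> pi (snd e) -> pi (fst f) <> pi (snd f).
Proof.
  intros [Ee [Ef [U|[[x [y [z [A1 [A2 [A3 [He Hf]]]]]]]|[a [b [c [e' [Sq [[H1 H2]|[H1 H2]]]]]]]]]]] P.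
  - destruct U as [<-|[E1 E2]]; auto. rewrite <- E1, <- E2. intros X; apply P; auto.
  - assert (Q : pi x <> pi y \/ pi y <> pi z \/ pi x <> pi z).
    { destruct He as [He|[He|He]]; apply unord_P in He; tauto. }
    destruct (tri_all x y z A1 A2 A3 Q) as [Q1 [Q2 Q3]].
    destruct Hf as [Hf|[Hf|Hf]]; apply (unord_P _ _ _ Hf); auto.
  - apply (unord_P _ _ _ H2). apply (unord_P _ _ _ H1) in P. apply (SQ a b c e'); auto.
  - apply (unord_P _ _ _ H2). apply (unord_P _ _ _ H1) in P. apply (SQ b c e' a); auto.
    apply sq_rot; auto.
Qed.

Lemma theta_fwd e : J0 e -> is_edge adj e /\ pi (fst e) <> pi (snd e).
Proof.
  intros H. apply clos_rt_rt1n in H.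
  assert (Base : is_edge adj (x0, y0) /\ pi (fst (x0, y0)) <> pi (snd (x0, y0))).
  { split. exact Hxy. simpl. rewrite !pi_of_C by (unfold C0; auto). apply adj_neq; auto. }
  revert Base. induction H; auto.
  intros [_ P]. apply IHclos_refl_trans_1n. split. apply H. apply (hs_pres x); auto.
Qed.


Lemma unord_edge e a b : unord_eq e (a, b) -> adj a b -> is_edge adj e.
Proof. intros [->|[E1 E2]] A; unfold is_edge; simpl in *; auto. rewrite E1, E2; apply adj_sym; auto. Qed.

Lemma J0_step e f : J0 e -> hyp_step adj e f -> J0 f.
Proof. intros H S. eapply rt_trans; eauto. apply rt_step; auto. Qed.

Lemma tri_hs x y z e f : adj x y -> adj y z -> adj x z ->
  (unord_eq e (x, y) \/ unord_eq e (y, z) \/ unord_eq e (x, z)) ->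
  (unord_eq f (x, y) \/ unord_eq f (y, z) \/ unord_eq f (x, z)) -> hyp_step adj e f.
Proof.
  intros A1 A2 A3 He Hf. split; [|split].
  - destruct He as [H|[H|H]]; eapply unord_edge; eauto.
  - destruct Hf as [H|[H|H]]; eapply unord_edge; eauto.
  - right; left. exists x, y, z. repeat split; auto.
Qed.

Lemma ue_refl (a b : V) : unord_eq (a, b) (a, b). Proof. left; auto. Qed.

Lemma clique_J0 v w : C0 v -> C0 w -> adj v w -> J0 (v, w).
Proof.
  intros Cv Cw A.
  assert (Cx : C0 x0) by (left; auto). assert (Cy : C0 y0) by (right; left; auto).
  destruct (classic (v = x0)) as [->|Nx].
  - destruct (classic (w = y0)) as [->|Ny]. apply rt_refl.
    apply (J0_step (x0, y0)). apply rt_refl.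
    apply (tri_hs x0 y0 w); auto using ue_refl, C0_adj.
  - assert (Hv : J0 (x0, v)).
    { destruct (classic (v = y0)) as [->|Ny]. apply rt_refl.
      apply (J0_step (x0, y0)). apply rt_refl.
      apply (tri_hs x0 y0 v); auto using ue_refl, C0_adj. }
    apply (J0_step (x0, v)); auto.
    destruct (classic (w = x0)) as [->|Nw].
    + split; [|split]. apply C0_adj; auto. apply adj_sym; apply C0_adj; auto.
      left. right. simpl; auto.
    + apply (tri_hs x0 v w); auto using ue_refl, C0_adj.
Qed.

Lemma theta_bwd_n n : forall v w, fC v = n -> adj v w -> pi v <> pi w -> J0 (v, w).
Proof.
  induction n; intros v w Fv A N.
  - apply clique_J0; auto. apply fC_zero; auto. apply fC_zero. rewrite <- (neq_f v w); auto.
  - assert (Fw : fC w = S n) by (rewrite <- (neq_f v w); auto).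
    assert (Dv : d (pi v) v = S n) by (rewrite pi_d; auto).
    destruct (walk_last n (pi v) v) as [v' [W A']]. rewrite <- Dv; apply d_walk.
    assert (L1 := d_le _ _ _ W).
    assert (L2 := d_adj (pi v) v' v A').
    assert (L3 := fC_le (pi v) v' (pi_C v)).
    assert (L4 := fC_adj v v' (adj_sym _ _ A')).
    assert (Pv' : pi v = pi v') by (apply gate_eq; auto using pi_C; lia).
    assert (Qw : d (pi w) w = S n) by (rewrite pi_d; auto).
    assert (Qv : d (pi w) v = S (S n)) by (rewrite dnpi; auto using pi_C).
    assert (Qv' : d (pi w) v' = S n) by (rewrite dnpi; auto using pi_C; [lia|congruence]).
    assert (Pw : d (pi v) w = S (S n)) by (rewrite dnpi; auto using pi_C).
    assert (Nvw : v' <> w) by (intros ->; lia).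
    destruct (quad_cond (pi w) v' w v) as [u [U1 [U2 U3]]]; auto using adj_sym. lia. lia.
    assert (Lu1 := d_adj (pi v) u w U2).
    assert (Lu2 := fC_le (pi w) u (pi_C w)).
    assert (Pu : pi v' <> pi u).
    { intros E. assert (X : d (pi v') u = fC u) by (apply dpi; auto). rewrite <- Pv' in X. lia. }
    assert (J1 : J0 (v', u)).
    { apply IHn; auto using adj_sym. lia. }
    assert (J2 : J0 (w, v)).
    { apply (J0_step (v', u)); auto. split; [|split].
      - apply adj_sym; auto.
      - apply adj_sym; auto.
      - right; right. exists v, v', u, w. split.
        + repeat split; auto using adj_sym.
          * intros ->. lia.
          * intros X. assert (L := d_adj (pi w) u v (adj_sym _ _ X)). lia.
          * intros X. assert (L := d_adj (pi v) v' w X). lia.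
        + right. split; apply ue_refl. }
    apply (J0_step (w, v)); auto. split; [|split]; try (apply adj_sym; auto; fail).
    unfold is_edge; simpl; auto. left; right; simpl; auto.
Qed.

Lemma theta_bwd v w : adj v w -> pi v <> pi w -> J0 (v, w).
Proof. intros. eapply theta_bwd_n; eauto. Qed.

Lemma theta v w : adj v w -> (J0 (v, w) <-> pi v <> pi w).
Proof. intros A; split. intros H; apply (theta_fwd _ H). apply theta_bwd; auto. Qed.

Lemma CJ c x : C0 c -> adj c x -> J0 (c, x) -> C0 x.
Proof.
  intros Cc A J. apply theta in J; auto. rewrite pi_of_C in J by auto.
  assert (L := fC_le c x Cc). rewrite d_adj1 in L by auto.
  destruct (fC x) as [|[|k]] eqn:F; try lia. apply fC_zero; auto.
  exfalso. apply J. apply gate_eq; auto. rewrite d_adj1; auto.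
Qed.

Lemma S1 x y : same_sector adj J0 x y -> pi x = pi y.
Proof.
  induction 1 as [x y [A N]| |]; auto; try congruence.
  destruct (classic (pi x = pi y)); auto. exfalso. apply N, theta_bwd; auto.
Qed.

Lemma S2_n n : forall v, fC v = n -> same_sector adj J0 v (pi v).
Proof.
  induction n; intros v Fv.
  - rewrite pi_of_C. apply rt_refl. apply fC_zero; auto.
  - assert (Dv : d (pi v) v = S n) by (rewrite pi_d; auto).
    destruct (walk_last n (pi v) v) as [u [W A']]. rewrite <- Dv; apply d_walk.
    assert (L1 := d_le _ _ _ W).
    assert (L2 := d_adj (pi v) u v A').
    assert (L3 := fC_le (pi v) u (pi_C v)).
    assert (L4 := fC_adj v u (adj_sym _ _ A')).
    assert (Pu : pi v = pi u) by (apply gate_eq; auto using pi_C; lia).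
    eapply rt_trans. apply rt_step. split. apply adj_sym; exact A'.
    intros J. apply theta_fwd in J. simpl in J. destruct J as [_ J]. apply J; auto.
    rewrite Pu. apply IHn. lia.
Qed.

Lemma S2 v : same_sector adj J0 v (pi v).
Proof. eapply S2_n; eauto. Qed.


Lemma J0_sym x y : J0 (x, y) -> J0 (y, x).
Proof.
  intros H. apply (J0_step (x, y)); auto. destruct (theta_fwd _ H) as [E _].
  split; [auto|split]. unfold is_edge in *; simpl in *; apply adj_sym; auto.
  left. right. simpl; auto.
Qed.

Lemma sec_sym x y : same_sector adj J0 x y -> same_sector adj J0 y x.
Proof.
  induction 1 as [x y [A N]| |]. apply rt_step. split. apply adj_sym; auto.
  intros X; apply N, J0_sym; auto. apply rt_refl. eapply rt_trans; eauto.
Qed.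

Lemma sec_iff x y : same_sector adj J0 x y <-> pi x = pi y.
Proof.
  split. apply S1. intros E. eapply rt_trans. apply S2. rewrite E. apply sec_sym, S2.
Qed.

Lemma C0_carrier v : C0 v -> in_carrier J0 v.
Proof.
  intros Cv. destruct (classic (v = x0)) as [->|N].
  - exists y0. apply rt_refl.
  - exists x0. apply clique_J0; auto. left; auto. apply C0_adj; auto. left; auto.
Qed.

End Theta.
End QM.

Section Grp.
Variables (T : Type) (m : T -> T -> T) (i : T -> T) (e : T).
Hypothesis H : is_group m i e.
Lemma gA a b c : m a (m b c) = m (m a b) c. Proof. apply H. Qed.
Lemma g1l a : m e a = a. Proof. apply H. Qed.
Lemma gVl a : m (i a) a = e. Proof. apply H. Qed.
Lemma gVr a : m a (i a) = e.
Proof.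
  assert (HH : m (m a (i a)) (m a (i a)) = m a (i a)).
  { rewrite <- gA, (gA (i a)), gVl, g1l; auto. }
  set (h := m a (i a)) in *.
  transitivity (m (m (i h) h) h). rewrite gVl, g1l; auto. rewrite <- gA, HH, gVl; auto.
Qed.
Lemma g1r a : m a e = a. Proof. rewrite <- (gVl a), gA, gVr, g1l; auto. Qed.
Lemma gII a : i (i a) = a.
Proof. rewrite <- (g1r (i (i a))), <- (gVl a), gA, gVl, g1l; auto. Qed.
Lemma gcancel a b : m (i b) a = e -> a = b.
Proof. intros E. rewrite <- (g1l a), <- (gVr b), <- gA, E, g1r; auto. Qed.
End Grp.


Section Main.
Variables (G : Type) (mul : G -> G -> G) (inv : G -> G) (one : G)
  (V : Type) (adj : V -> V -> Prop) (act : G -> V -> V).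
Hypothesis HG : is_group mul inv one.
Hypothesis HX : quasi_median adj.
Hypothesis Hact : is_graph_action mul one adj act.
Hypothesis Hspecial : special_action inv one adj act.

Lemma mVl g : mul (inv g) g = one. Proof. apply (gVl _ _ _ _ HG). Qed.
Lemma mVr g : mul g (inv g) = one. Proof. apply (gVr _ _ _ _ HG). Qed.
Lemma act1 x : act one x = x. Proof. apply Hact. Qed.
Lemma actM g h x : act (mul g h) x = act g (act h x). Proof. apply Hact. Qed.
Lemma act_adj g x y : adj x y -> adj (act g x) (act g y). Proof. apply Hact. Qed.
Lemma actVl g x : act (inv g) (act g x) = x.
Proof. rewrite <- actM, mVl, act1; auto. Qed.
Lemma actVr g x : act g (act (inv g) x) = x.
Proof. rewrite <- actM, mVr, act1; auto. Qed.

Definition stab J g := stab_hyp inv act J g.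

Lemma stab_char J g : stab J g <-> forall x y, J (x, y) <-> J (act g x, act g y).
Proof.
  split.
  - intros H x y. specialize (H (act g x, act g y)). unfold translate_hyp in H; simpl in H.
    rewrite !actVl in H. auto.
  - intros H [a b]. unfold translate_hyp; simpl. rewrite (H (act (inv g) a)), !actVr. tauto.
Qed.

Lemma stab_one J : stab J one.
Proof. apply stab_char. intros. rewrite !act1. tauto. Qed.
Lemma stab_mul J g h : stab J g -> stab J h -> stab J (mul g h).
Proof. rewrite !stab_char. intros A B x y. rewrite !actM, B, A. tauto. Qed.
Lemma stab_inv J g : stab J g -> stab J (inv g).
Proof. rewrite !stab_char. intros A x y. rewrite (A (act (inv g) x)), !actVr. tauto. Qed.

Lemma stab_sector J g x y : stab J g -> same_sector adj J x y -> same_sector adj J (act g x) (act g y).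
Proof.
  intros S. rewrite stab_char in S. induction 1 as [x y [A N]| |].
  - apply rt_step. split. apply act_adj; auto. rewrite <- S; auto.
  - apply rt_refl.
  - eapply rt_trans; eauto.
Qed.

Lemma carrier_tr J g v : in_carrier J v -> in_carrier (translate_hyp inv act g J) (act g v).
Proof. intros [w H]. exists (act g w). unfold translate_hyp; simpl. rewrite !actVl; auto. Qed.

Lemma share J g v : is_hyperplane adj J -> in_carrier J v ->
  in_carrier (translate_hyp inv act g J) v -> stab J g.
Proof.
  intros HJ C1 C2. destruct Hspecial as [[_ [H1 _]] _].
  destruct (classic (stab J g)) as [|N]; auto. exfalso.
  destruct (H1 J g HJ N) as [T1 T2]. apply T2. split; [|split]; auto.
  - intros X. apply N. intros e. specialize (X e). tauto.
  - exists v; auto.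
Qed.

Lemma J0_hyp x0 y0 : adj x0 y0 -> is_hyperplane adj (J0 V adj x0 y0).
Proof. intros A. exists (x0, y0). split. exact A. tauto. Qed.

Section Edge.
Variables x0 y0 : V.
Hypothesis Hxy : adj x0 y0.
Notation J := (J0 V adj x0 y0).
Notation P := (pi V adj HX x0 y0).
Notation C := (C0 V adj x0 y0).

Lemma free_pi g x : stab J g -> P (act g x) = P x -> forall y, P (act g y) = P y.
Proof.
  intros S E y. destruct Hspecial as [_ F].
  apply (sec_iff V adj HX x0 y0 Hxy). apply (F J (J0_hyp _ _ Hxy) g S).
  exists x. apply (sec_iff V adj HX x0 y0 Hxy); auto.
Qed.

Lemma stab_P g x y : stab J g -> P x = P y -> P (act g x) = P (act g y).
Proof.
  intros S E. apply (sec_iff V adj HX x0 y0 Hxy). apply stab_sector; auto.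
  apply (sec_iff V adj HX x0 y0 Hxy); auto.
Qed.

Lemma maps_C k z : stab J k -> C z -> C (act k z) -> forall v, C v -> C (act k v).
Proof.
  intros S Cz Ckz v Cv. destruct (classic (v = z)) as [->|N]; auto.
  assert (A : adj z v) by (apply (C0_adj V adj HX x0 y0 Hxy); auto).
  assert (Jz : J (z, v)) by (apply (clique_J0 V adj HX x0 y0 Hxy); auto).
  rewrite stab_char in S. apply S in Jz.
  apply (CJ V adj HX x0 y0 Hxy (act k z)); auto. apply act_adj; auto.
Qed.

Lemma stab_C_of k z : stab J k -> C z -> C (act k z) -> stab_set inv act C k.
Proof.
  intros S Cz Ckz v. split; intros H.
  - rewrite <- (actVr k v). apply (maps_C k z); auto.
  - apply (maps_C (inv k) (act k z)); auto using stab_inv. rewrite actVl; auto.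
Qed.

Lemma stabC_in g v : stab_set inv act C g -> C v -> C (act g v).
Proof. intros S Cv. apply (S (act g v)). rewrite actVl; auto. Qed.

Lemma stabC_inv g : stab_set inv act C g -> stab_set inv act C (inv g).
Proof. intros S v. rewrite (gII _ _ _ _ HG). split; intros H.
  assert (X := proj2 (S (act g v)) H). rewrite actVl in X. exact X. apply stabC_in; auto. Qed.

Lemma stabC_J g : stab_set inv act C g -> stab J g.
Proof.
  intros S. apply (share J g (act g x0)). apply J0_hyp; auto.
  apply (C0_carrier V adj HX x0 y0 Hxy). apply stabC_in; auto. left; auto.
  apply carrier_tr. apply (C0_carrier V adj HX x0 y0 Hxy). left; auto.
Qed.

End Edge.

Lemma fix_nbr g v y : act g v = v -> adj v y -> act g y = y.
Proof.
  intros E A.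
  assert (S : stab (J0 V adj v y) g).
  { apply (share _ g v). apply J0_hyp; auto. exists y. apply rt_refl.
    exists (act g y). unfold translate_hyp; simpl.
    assert (Ei : act (inv g) v = v).
    { transitivity (act (inv g) (act g v)). rewrite E; auto. apply actVl. }
    rewrite actVl, Ei. apply rt_refl. }
  assert (Cy : C0 V adj v y y) by (right; left; auto).
  assert (Cv : C0 V adj v y v) by (left; auto).
  assert (F := free_pi v y A g v S). rewrite E in F. specialize (F eq_refl y).
  rewrite (pi_of_C V adj HX v y A y Cy) in F.
  assert (Jg : J0 V adj v y (v, act g y)).
  { rewrite stab_char in S. assert (X := proj1 (S v y) (rt_refl _ _ _)). rewrite E in X. exact X. }
  assert (Cgy : C0 V adj v y (act g y)).
  { apply (CJ V adj HX v y A v); auto. rewrite <- E. apply act_adj; auto. }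
  rewrite (pi_of_C V adj HX v y A _ Cgy) in F. auto.
Qed.

Lemma fix_all g v : act g v = v -> g = one.
Proof.
  intros E. destruct Hspecial as [[Ff _] _]. apply Ff. intros x.
  destruct (Hconn V adj HX v x) as [n W]. induction W; auto.
  apply IHW. apply (fix_nbr g x); auto.
Qed.


Hypothesis Horb : finitely_many_vertex_orbits act.

Section Edge2.
Variables x0 y0 : V.
Hypothesis Hxy : adj x0 y0.
Notation J := (J0 V adj x0 y0).
Notation P := (pi V adj HX x0 y0).
Notation C := (C0 V adj x0 y0).

Lemma PC v : C (P v). Proof. apply pi_C. Qed.
Lemma PP v : P (P v) = P v. Proof. apply (pi_of_C V adj HX x0 y0 Hxy), PC. Qed.
Lemma Ccar v : C v -> in_carrier J v. Proof. apply (C0_carrier V adj HX x0 y0 Hxy). Qed.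
Lemma secP x y : same_sector adj J x y <-> P x = P y. Proof. apply (sec_iff V adj HX x0 y0 Hxy). Qed.

Lemma orb_fin : exists l : list V, forall x, exists u, In u l /\ sector_orbit_rel inv adj act J u x.
Proof.
  destruct Horb as [l Hl].
  set (sel := fun u => epsilon (inhabits u) (fun w => (exists h, act h u = w) /\ in_carrier J w)).
  exists (map sel l). intros x.
  destruct (Hl (P x)) as [u [g [Iu Eg]]].
  assert (Hs : (exists h, act h u = sel u) /\ in_carrier J (sel u)).
  { apply (epsilon_spec (inhabits u) (fun w => (exists h, act h u = w) /\ in_carrier J w)).
    exists (P x). split. exists g; auto. apply Ccar, PC. }
  destruct Hs as [[h Eh] Cs].
  assert (Ek : act (mul g (inv h)) (sel u) = P x) by (rewrite actM, <- Eh, actVl; auto).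
  exists (sel u). split. apply in_map; auto.
  exists (mul g (inv h)). split.
  - apply (share J _ (P x)). apply J0_hyp; auto. apply Ccar, PC.
    rewrite <- Ek. apply carrier_tr; auto.
  - rewrite Ek. apply secP. apply PP.
Qed.

Lemma fi_inj b1 b2 : stab_set inv act C b1 -> stab_set inv act C b2 ->
  sect_eq adj act J b1 b2 -> b1 = b2.
Proof.
  intros S1 S2 H. specialize (H x0). apply secP in H.
  assert (C1 : C (act b1 x0)) by (apply stabC_in; auto; left; auto).
  assert (C2 : C (act b2 x0)) by (apply stabC_in; auto; left; auto).
  rewrite (pi_of_C V adj HX x0 y0 Hxy _ C1), (pi_of_C V adj HX x0 y0 Hxy _ C2) in H.
  apply (gcancel _ _ _ _ HG). apply (fix_all _ x0). rewrite actM, H, actVl; auto.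
Qed.

Lemma fi_cover : exists lc : list G, (forall c, In c lc -> stab J c) /\
  forall a, stab J a -> exists c b, In c lc /\ stab_set inv act C b /\ sect_eq adj act J a (mul c b).
Proof.
  destruct Horb as [l Hl].
  set (R := fun u (p : G * G) => stab J (fst p) /\
    ((exists c h, stab J c /\ C (act h u) /\ same_sector adj J (act c x0) (act h u)) ->
      C (act (snd p) u) /\ same_sector adj J (act (fst p) x0) (act (snd p) u))).
  set (sel2 := fun u => epsilon (inhabits (one, one)) (R u)).
  assert (HR : forall u, R u (sel2 u)).
  { intros u. apply epsilon_spec.
    destruct (classic (exists c h, stab J c /\ C (act h u) /\ same_sector adj J (act c x0) (act h u)))
      as [[c [h Hc]]|N].
    - exists (c, h). split; simpl; tauto.
    - exists (one, one). split. apply stab_one. intros X; contradiction. }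
  exists (map (fun u => inv (fst (sel2 u))) l). split.
  - intros c Ic. apply in_map_iff in Ic. destruct Ic as [u [<- _]]. apply stab_inv, (HR u).
  - intros a Sa.
    destruct (Hl (P (act (inv a) x0))) as [u [g0 [Iu Eg]]].
    destruct (HR u) as [Sc Hc].
    destruct Hc as [Ch Sch].
    { exists (inv a), g0. split. apply stab_inv; auto. rewrite Eg. split. apply PC.
      apply secP. rewrite PP. auto. }
    set (c := fst (sel2 u)) in *. set (h := snd (sel2 u)) in *.
    set (k := mul g0 (inv h)).
    assert (Ek : act k (act h u) = P (act (inv a) x0)).
    { unfold k. rewrite actM, actVl; auto. }
    assert (Sk : stab J k).
    { apply (share J k (P (act (inv a) x0))). apply J0_hyp; auto. apply Ccar, PC.
      rewrite <- Ek. apply carrier_tr, Ccar; auto. }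
    assert (SCk : stab_set inv act C k).
    { apply (stab_C_of x0 y0 Hxy k (act h u)); auto. rewrite Ek. apply PC. }
    exists (inv c), (inv k). split; [|split].
    + apply in_map_iff. exists u. auto.
    + apply stabC_inv; auto.
    + intros x. apply secP.
      set (m := mul a (mul k c)).
      assert (Sm : stab J m) by (apply stab_mul; auto; apply stab_mul; auto).
      assert (Pm : P (act m x0) = P x0).
      { unfold m. rewrite !actM.
        apply secP in Sch.
        assert (X1 := stab_P x0 y0 Hxy k _ _ Sk Sch). rewrite Ek, PP in X1.
        assert (X2 := stab_P x0 y0 Hxy a _ _ Sa X1). rewrite actVr in X2. exact X2. }
      assert (F := free_pi x0 y0 Hxy m x0 Sm Pm (act (mul (inv c) (inv k)) x)).
      unfold m in F. rewrite !actM in F. rewrite actVr, actVr in F.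
      rewrite actM. exact F.
Qed.

End Edge2.

End Main.

Theorem corollary3p5
  (G : Type) (mul : G -> G -> G) (inv : G -> G) (one : G)
  (V : Type) (adj : V -> V -> Prop) (act : G -> V -> V)
  (HG : is_group mul inv one)
  (HX : quasi_median adj)
  (Hact : is_graph_action mul one adj act)
  (Hspecial : special_action inv one adj act)
  (Horb : finitely_many_vertex_orbits act) :
  forall J : V * V -> Prop, is_hyperplane adj J ->
    (* frak-S(J) has finitely many orbits on S(J) *)
    (exists l : list V, forall x, exists u, In u l /\ sector_orbit_rel inv adj act J u x) /\
    (* frak-S(J) has a finite-index subgroup isomorphic to stab_G(C),
       C a clique whose edges lie in J *)
    (exists C : V -> Prop, is_clique adj C /\
       (forall x y, C x -> C y -> adj x y -> J (x, y)) /\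
       fi_sub_iso (stab_hyp inv act J) (sect_eq adj act J) mul
                  (stab_set inv act C) mul) /\
    (* for every group K whose cardinality is the number of orbits of
       frak-S(J) on S(J): K is finite and frak-S(J) (+) K contains a
       finite-index subgroup isomorphic to the stabiliser of a clique *)
    (forall (K : Type) (mulK : K -> K -> K) (invK : K -> K) (oneK : K)
            (f : K -> V),
       is_group mulK invK oneK ->
       (forall x, exists k, sector_orbit_rel inv adj act J (f k) x) ->
       (forall k1 k2, sector_orbit_rel inv adj act J (f k1) (f k2) -> k1 = k2) ->
       (exists lK : list K, forall k, In k lK) /\
       exists C : V -> Prop, is_clique adj C /\
         fi_sub_iso (fun p : G * K => stab_hyp inv act J (fst p))
           (fun p q : G * K => sect_eq adj act J (fst p) (fst q) /\ snd p = snd q)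
           (fun p q : G * K => (mul (fst p) (fst q), mulK (snd p) (snd q)))
           (stab_set inv act C) mul).
Proof.
  intros J HJ. destruct HJ as [[x0 y0] [Hxy HJ]]. unfold is_edge in Hxy; simpl in Hxy.
  assert (EJ : J = J0 V adj x0 y0).
  { apply functional_extensionality; intros f; apply propositional_extensionality; apply HJ. }
  subst J.
  destruct (orb_fin G mul inv one V adj act HG HX Hact Hspecial Horb x0 y0 Hxy) as [l Hl].
  destruct (fi_cover G mul inv one V adj act HG HX Hact Hspecial Horb x0 y0 Hxy) as [lc [Hlc Hcov]].
  assert (FI : fi_sub_iso (stab_hyp inv act (J0 V adj x0 y0)) (sect_eq adj act (J0 V adj x0 y0)) mul
                  (stab_set inv act (C0 V adj x0 y0)) mul).
  { exists (fun b => b). split; [|split; [|split]].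
    - intros b Hb. apply (stabC_J G mul inv one V adj act HG HX Hact Hspecial x0 y0 Hxy); auto.
    - intros. intros x. apply rt_refl.
    - intros. eapply (fi_inj G mul inv one V adj act HG HX Hact Hspecial x0 y0 Hxy); eauto.
    - exists lc. split; auto. }
  split; [exists l; auto|split].
  - exists (C0 V adj x0 y0). split. apply C0_clique; auto. split; auto.
    intros; apply (clique_J0 V adj HX x0 y0 Hxy); auto.
  - intros K mulK invK oneK f HK Hsurj Hinj.
    assert (Fin : exists lK : list K, forall k, In k lK).
    { set (kap := fun u => epsilon (inhabits oneK)
                  (fun k => sector_orbit_rel inv adj act (J0 V adj x0 y0) (f k) u)).
      exists (map kap l). intros k. destruct (Hl (f k)) as [u [Iu Ou]].
      assert (Hk : sector_orbit_rel inv adj act (J0 V adj x0 y0) (f (kap u)) u).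
      { apply (epsilon_spec (inhabits oneK)
          (fun k => sector_orbit_rel inv adj act (J0 V adj x0 y0) (f k) u)). apply Hsurj. }
      apply in_map_iff. exists u. split; auto. apply Hinj.
      destruct Hk as [g1 [S1 X1]]. destruct Ou as [g2 [S2 X2]].
      exists (mul g2 g1). split.
      apply (stab_mul G mul inv one V adj act HG Hact); auto.
      rewrite (actM G mul one V adj act Hact). eapply rt_trans.
      apply (stab_sector G mul inv one V adj act HG Hact); eauto. exact X2. }
    destruct Fin as [lK HlK]. split. exists lK; auto.
    exists (C0 V adj x0 y0). split. apply C0_clique; auto.
    exists (fun b => (b, oneK)). split; [|split; [|split]].
    + intros b Hb. simpl. apply (stabC_J G mul inv one V adj act HG HX Hact Hspecial x0 y0 Hxy); auto.
    + intros b1 b2 _ _. simpl. split. intros x. apply rt_refl. symmetry; apply (g1l _ _ _ _ HK).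
    + intros b1 b2 H1 H2 [E _]. simpl in E.
      eapply (fi_inj G mul inv one V adj act HG HX Hact Hspecial x0 y0 Hxy); eauto.
    + exists (list_prod lc lK). split.
      * intros [c k] I. apply in_prod_iff in I. simpl. apply Hlc; tauto.
      * intros [a ka] Sa. simpl in Sa. destruct (Hcov a Sa) as [c [b [Ic [Sb Eb]]]].
        exists (c, ka), b. split. apply in_prod_iff; split; auto. split; auto.
        simpl. split; auto. symmetry; apply (g1r _ _ _ _ HK).
Qed.
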